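(* Let $p$ be a positive integer and $d$ a positive integer. Then, as formal power series, $T_d(x)=H_p(x)^d$.
   Context: A monotonic lattice path is a sequence of lattice points $P_0P_1\ldots P_l$ with $P_{i+1}-P_i\in\{(1,0),(0,1)\}$. Fix a positive integer $p$. For integers $n\ge0$, $d>0$, $T(n,d)$ is the number of monotonic lattice paths from $(0,0)$ to $(n,pn+d)$ all of whose points other than the first and last lie strictly below the line $y=px+d$ (with $T(0,d)=1$), and $T_d(x)=\sum_{n\ge0}T(n,d)x^n$. $M(p,n)=\frac{1}{pn+n+1}\binom{pn+n+1}{n}$ (the number of monotonic lattice paths from $(0,0)$ to $(n,pn)$ with no point strictly above $y=px$) and $H_p(x)=\sum_{n\ge0}M(p,n)x^n$. *)

(* Defs.v *)
From HB Require Import structures.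
From mathcomp Require Import all_boot all_order all_algebra.
Set Implicit Arguments. Unset Strict Implicit. Unset Printing Implicit Defensive.
Import Order.TTheory GRing.Theory Num.Theory.

(* A monotonic lattice path from (0,0) is encoded by its step sequence
   s : seq bool, true = step (1,0), false = step (0,1).
   The point P_i (i steps in) has coordinates (px s i, py s i). *)
Definition px (s : seq bool) (i : nat) : nat := count id (take i s).
Definition py (s : seq bool) (i : nat) : nat := count negb (take i s).

(* Paths from (0,0) to (n, p*n+d): step sequences of length n + (p*n+d)
   with exactly n right steps.  Condition: every point P_i with 0 < i < l
   lies strictly below the line y = p x + d. *)
Definition Tpath (p n d : nat) (s : seq bool) : bool :=
  (count id s == n) &&
  all (fun i => py s i < p * px s i + d) (iota 1 (size s).-1).

(* T(n,d) : number of such paths (for n = 0 this evaluates to 1, the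
   paper's convention). *)
Definition T (p n d : nat) : nat :=
  #|[set s : (n + (p * n + d)).-tuple bool | Tpath p n d s]|.

Definition M (p n : nat) : nat := 'C(p * n + n + 1, n) %/ (p * n + n + 1).

(* Truncation of H_p(x) to degree < N.+1 (as a polynomial over int);
   coefficients of degree <= N of H_p(x)^d agree with those of
   (Htrunc p N)^d. *)
Definition Htrunc (p N : nat) : {poly int} := \poly_(i < N.+1) Posz (M p i).

(* Main.v *)
From Stdlib Require Import Lia Arith Ring.
Require Import Defs.
From HB Require Import structures.
From mathcomp Require Import all_boot all_order all_algebra.
Import GRing.Theory.
Set Implicit Arguments. Unset Strict Implicit.

Ltac nlia := (try apply/leP); (try apply/ltP); rewrite -?plusE -?multE -?minusE; lia.
Ltac nring := rewrite -?plusE -?multE; ring.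

Definition F (L : nat) (P : pred (seq bool)) : nat :=
  #|[set t : L.-tuple bool | P t]|.

Lemma eq_F L (P Q : pred (seq bool)) : P =1 Q -> F L P = F L Q.
Proof. by move=> PQ; rewrite /F; apply: eq_card => t; rewrite !inE PQ. Qed.

Lemma F_pred0 L (P : pred (seq bool)) : P =1 pred0 -> F L P = 0.
Proof. by move=> PQ; rewrite /F; apply: eq_card0 => t; rewrite !inE PQ. Qed.

Lemma F0 P : F 0 P = P [::].
Proof.
rewrite /F; case: (boolP (P [::])) => HP.
  rewrite (eq_card (B := [set: 0.-tuple bool])); first by rewrite cardsT card_tuple.
  by move=> t; rewrite !inE (tuple0 t).
by apply: eq_card0 => t; rewrite !inE (tuple0 t) (negbTE HP).
Qed.

Lemma cons_inj L (b : bool) : injective (fun t : L.-tuple bool => [tuple of b :: t]).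
Proof. by move=> t1 t2 /(congr1 val) [] /val_inj. Qed.

Lemma FS L P : F L.+1 P = F L (fun s => P (true :: s)) + F L (fun s => P (false :: s)).
Proof.
rewrite /F.
rewrite -(cardsID [set t : L.+1.-tuple bool | thead t] [set t : L.+1.-tuple bool | P t]).
congr (_ + _).
  rewrite -(card_imset _ (@cons_inj L true)).
  apply: eq_card => t; case/tupleP: t => b t.
  rewrite !inE theadE; case: b => /=.
    by rewrite (mem_imset _ _ (@cons_inj L true)) inE andbT.
  rewrite andbF; apply/esym/negP => /imsetP [t' _] /(congr1 (fun u : L.+1.-tuple bool => thead u)).
  by rewrite !theadE.
rewrite -(card_imset _ (@cons_inj L false)).
apply: eq_card => t; case/tupleP: t => b t.
rewrite !inE theadE; case: b => /=.
  apply/esym/negP => /imsetP [t' _] /(congr1 (fun u : L.+1.-tuple bool => thead u)).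
  by rewrite !theadE.
by rewrite (mem_imset _ _ (@cons_inj L false)) inE.
Qed.
Lemma iota2 k : iota 2 k = map S (iota 1 k).
Proof. by rewrite (iotaDl 1 1); apply: eq_map => i; rewrite add1n. Qed.

Lemma pxS b x i : px (b :: x) i.+1 = b + px x i.
Proof. by rewrite /px /=. Qed.
Lemma pyS b x i : py (b :: x) i.+1 = ~~ b + py x i.
Proof. by rewrite /py /=. Qed.

Lemma Tpath_true p n d s : 0 < p -> Tpath p n.+1 d (true::s) = Tpath p n (d+p) s.
Proof.
move=> hp; rewrite /Tpath /= eqSS; congr (_ && _).
case: s => [//|b s] /=.
rewrite (_ : py [:: true, b & s] 1 = 0) // (_ : px [:: true, b & s] 1 = 1) // muln1 (addn_gt0 p d) hp /=.
rewrite iota2 all_map; apply: eq_all => i /=.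
rewrite pxS pyS /=; congr (_ < _); nlia.
Qed.

Lemma Tpath_true0 p d s : Tpath p 0 d (true::s) = false.
Proof. by rewrite /Tpath /=. Qed.

Lemma Tpath_false p n d s : 0 < d -> Tpath p n d.+1 (false::s) = Tpath p n d s.
Proof.
move=> hd; rewrite /Tpath /=; congr (_ && _).
case: s => [//|b s] /=.
rewrite (_ : py [:: false, b & s] 1 = 1) // (_ : px [:: false, b & s] 1 = 0) // muln0 add0n ltnS hd /=.
rewrite iota2 all_map; apply: eq_all => i /=.
rewrite pxS pyS /= add1n addnS ltnS //.
Qed.

Lemma Tpath_false1 p n b s : Tpath p n 1 (false::b::s) = false.
Proof. by rewrite /Tpath /=; rewrite (_ : py [:: false, b & s] 1 = 1) // (_ : px [:: false, b & s] 1 = 0) // muln0 ltnn andbF. Qed.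

Lemma TF p n d : T p n d = F (n + (p*n+d)) (Tpath p n d).
Proof. by []. Qed.

Lemma T0 p d : T p 0 d.+1 = 1.
Proof.
elim: d => [|d IH].
  rewrite TF muln0 FS !F0.
  by rewrite /Tpath.
rewrite TF (_ : 0 + (p*0 + d.+2) = (0 + (p*0+d.+1)).+1); last by nlia.
rewrite FS (@F_pred0 _ (fun s => Tpath p 0 d.+2 (true :: s))); last by move=> s; rewrite Tpath_true0.
by rewrite add0n -IH TF; apply: eq_F => s; rewrite Tpath_false.
Qed.

Lemma T_rec p n d : 0 < p ->
  T p n.+1 d.+2 = T p n.+1 d.+1 + T p n (d.+2+p).
Proof.
move=> hp.
rewrite TF (_ : n.+1 + (p*n.+1 + d.+2) = (n + (p*n + (d.+2+p))).+1); last by nlia.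
rewrite FS addnC; congr (_ + _).
  rewrite TF (_ : n + (p * n + (d.+2 + p)) = n.+1 + (p*n.+1 + d.+1)); last by nlia.
  by apply: eq_F => s; rewrite Tpath_false.
by rewrite TF; apply: eq_F => s; rewrite Tpath_true.
Qed.

Lemma T_rec1 p n : 0 < p -> T p n.+1 1 = T p n (1+p).
Proof.
move=> hp.
rewrite TF (_ : n.+1 + (p*n.+1 + 1) = (n + (p*n + (1+p))).+1); last by nlia.
rewrite FS.
rewrite (_ : n + (p*n + (1+p)) = (n + (p*n + p)).+1); last by nlia.
rewrite [in X in _ + X]FS.
rewrite (@F_pred0 _ (fun s => Tpath p n.+1 1 [:: false, true & s])); last by move=> s; rewrite Tpath_false1.
rewrite (@F_pred0 _ (fun s => Tpath p n.+1 1 [:: false, false & s])); last by move=> s; rewrite Tpath_false1.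
rewrite !addn0 TF (_ : n + (p*n + (1+p)) = (n + (p*n + p)).+1); last by nlia.
by apply: eq_F => s; rewrite Tpath_true.
Qed.

Local Open Scope ring_scope.

Definition G (p n e : nat) : int :=
  if n is k.+1 then ('C(p*n+n+e, n))%:Z - (p * 'C(p*n+n+e, k))%:Z else 1.

Lemma g1 p k e : G p k.+1 e.+1 = G p k.+1 e + G p k (e.+1+p).
Proof.
case: k => [|j].
  rewrite /G !bin1 !bin0 !muln1 !subzn; try by nlia.
  rewrite [in RHS](_ : 1 = Posz 1) // -PoszD; congr Posz; nlia.
rewrite /G.
set N := (p * j.+2 + j.+2 + e)%N.
rewrite (_ : (p * j.+2 + j.+2 + e.+1 = N.+1)%N); last by rewrite /N; nlia.
rewrite (_ : (p * j.+1 + j.+1 + (e.+1+p) = N)%N); last by rewrite /N; nlia.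
rewrite (binS N j.+1) (binS N j) mulnDr !PoszD opprD addrACA.
by [].
Qed.

Lemma g2 p k : G p k.+1 0 = G p k p.
Proof.
case: k => [|j].
  rewrite /G !bin1 !bin0 !muln1 !subzn; try by nlia.
  congr Posz; nlia.
rewrite /G.
set N := (p * j.+2 + j.+1)%N.
rewrite (_ : (p * j.+2 + j.+2 + 0 = N.+1)%N); last by rewrite /N; nlia.
rewrite (_ : (p * j.+1 + j.+1 + p = N)%N); last by rewrite /N; nlia.
have key : 'C(N, j.+2) = (p * 'C(N, j.+1))%N.
  apply/eqP; rewrite -(eqn_pmul2l (ltn0Sn j.+1)) mul_bin_left.
  rewrite (_ : (N - j.+1 = p * j.+2)%N); last by rewrite /N; nlia.
  by rewrite mulnCA mulnA.
rewrite (binS N j.+1) (binS N j) key mulnDr !PoszD (addrC (Posz (p * _))) addrKA.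
by [].
Qed.

Lemma gM p n : (0 < p)%N -> G p n 0 = Posz (M p n).
Proof.
move=> hp; case: n => [|k].
  by rewrite /G /M muln0 bin0 divn1.
rewrite /G /M.
set K := k.+1.
set m := (p * K + K)%N.
rewrite addn0 -/m.
set a := 'C(m, K). set b := 'C(m, k).
have Ka : (K * a = (p * K + 1) * b)%N.
  rewrite /a /K mul_bin_left; congr (_ * _)%N; rewrite /m /K; nlia.
have pba : (p * b <= a)%N.
  rewrite -(leq_pmul2l (ltn0Sn k)) -/K Ka mulnA (mulnC K p).
  by apply: leq_mul => //; rewrite addn1.
have Kx : (K * (a - p * b) = b)%N.
  by rewrite mulnBr Ka mulnDl mul1n mulnA (mulnC K p) addKn.
have Ca : ('C(m.+1, K) = m.+1 * (a - p * b))%N.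
  apply/eqP; rewrite -(eqn_pmul2l (ltn0Sn k)) -/K.
  rewrite /K (binS m k) -/K -/a -/b mulnDr Ka mulnCA Kx.
  rewrite -mulnDl; apply/eqP; congr (_ * _)%N; rewrite /m; nlia.
rewrite addn1 Ca mulKn // subzn //.
Qed.

Lemma AG p : (0 < p)%N -> forall n e, Posz (T p n e.+1) = G p n e.
Proof.
move=> hp; elim=> [|k IHk] e.
  by rewrite T0.
elim: e => [|e IHe].
  by rewrite T_rec1 // add1n IHk g2.
by rewrite T_rec // PoszD IHe addSn IHk g1.
Qed.

Lemma TM p n : (0 < p)%N -> T p n 1 = M p n.
Proof. by move=> hp; have := AG hp n 0; rewrite gM // => -[]. Qed.

Lemma Hcoef p N j : (j <= N)%N -> (Htrunc p N)`_j = Posz (M p j).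
Proof. by rewrite /Htrunc coef_poly ltnS => ->. Qed.

Lemma Hind p d : forall N N' m, (m <= N)%N -> (m <= N')%N ->
  (Htrunc p N ^+ d)`_m = (Htrunc p N' ^+ d)`_m.
Proof.
elim: d => [|d IH] N N' m h1 h2; first by rewrite !expr0.
rewrite !exprS !coefM; apply: eq_bigr => i _.
have hi : (i <= m)%N by rewrite -ltnS ltn_ord.
rewrite !Hcoef ?(leq_trans hi) //.
by rewrite (IH N N') // (leq_trans (leq_subr i m)).
Qed.

Lemma coefXD (P : {poly int}) a b m :
  (P ^+ (a + b))`_m = \sum_(j < m.+1) (P ^+ a)`_j * (P ^+ b)`_(m - j).
Proof. by rewrite exprD coefM. Qed.

Lemma coef0X (P : {poly int}) d : (P ^+ d)`_0 = P`_0 ^+ d.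
Proof.
elim: d => [|d IH]; first by rewrite !expr0 coefC.
by rewrite !exprS coef0M IH.
Qed.

Lemma M0 p : M p 0 = 1%N.
Proof. by rewrite /M muln0 bin0 divn1. Qed.

Lemma mainL p : (0 < p)%N -> forall n d, (0 < d)%N ->
  Posz (T p n d) = (Htrunc p n ^+ d)`_n.
Proof.
move=> hp n; elim/ltn_ind: n => n IHn d hd.
case: n IHn => [|k] IHn.
  case: d hd => // d _.
  by rewrite T0 coef0X Hcoef // M0 expr1n.
elim: d hd => [//|d IHd] _.
case: d IHd => [|e] IHd.
  by rewrite expr1 Hcoef // TM.
rewrite T_rec // PoszD IHd // (IHn k (ltnSn k) (e.+2+p)%N) ?addn_gt0 ?hp ?orbT //.
rewrite (@Hind p _ k k.+1 k) // [in RHS]exprS coefM big_ord_recl Hcoef // M0 mul1r subn0.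
congr (_ + _).
rewrite (_ : (e.+2+p = p.+1 + e.+1)%N); last by nlia.
rewrite coefXD; apply: eq_bigr => i _.
rewrite lift0 subSS Hcoef; last by rewrite ltn_ord.
rewrite -TM // T_rec1 // (IHn i) ?add1n ?ltnS ?ltn_ord //.
  have hik : (i <= k.+1)%N by apply: ltnW; rewrite ltnS -ltnS ltn_ord.
  by rewrite (@Hind p _ i k.+1 i).
by rewrite -ltnS ltn_ord.
Qed.

Theorem mainTheorem8 (p d : nat) (hp : (0 < p)%N) (hd : (0 < d)%N) :
  forall n : nat, Posz (T p n d) = (Htrunc p n ^+ d)`_n.
Proof. by move=> n; apply: mainL. Qed.
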